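(* The consequence relation $ss \cap tt$ has a unique truth-functional binary connective $\to$ satisfying the single-conclusion version of the conclusion-Gentzen regularity rule (i.e.\ the deduction theorem): for all sets of formulae $\Gamma$ and formulae $A,B$, $\Gamma \vdash A \to B$ iff $\Gamma, A\vdash B$. It is the connective whose truth-function is given by $x \to y = 1$ if $x \leq y$, and $x \to y = y$ otherwise; that is, $1\to 1 = 1$, $1\to \tfrac{1}{2} = \tfrac{1}{2}$, $1 \to 0 = 0$, $\tfrac{1}{2}\to 1 = 1$, $\tfrac{1}{2}\to\tfrac{1}{2} = 1$, $\tfrac{1}{2}\to 0 = 0$, and $0 \to y = 1$ for every $y$ (a three-valued Gödel implication). However, $ss \cap tt$ has no truth-functional connective $\to$ satisfying the single-conclusion version of the premise-Gentzen regularity rule: for all $\Gamma, A, B$, $\Gamma, A\to B\vdash$ (empty conclusion) iff ($\Gamma, B \vdash$ and $\Gamma \vdash A$). The Gödel conditional just defined does, however, satisfy the right-to-left direction of that premise rule: if $\Gamma, B \vdash$ and $\Gamma \vdash A$, then $\Gamma, A\to B\vdash$.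
   Context: Three-valued truth-functional semantics with truth values $\{0, \tfrac{1}{2}, 1\}$ ordered $0 < \tfrac{1}{2} < 1$, over a sentential language whose semantics is constant expressive (for each truth value there is a formula taking that value under every valuation), and where consequence relates sets of premises to sets of conclusions (possibly empty). The relation $ss \cap tt$ is the intersection of the pure consequence relation $ss$ (preservation of the value $1$: whenever all premises take value $1$, some conclusion takes value $1$) and the pure consequence relation $tt$ (preservation of non-zero values: whenever all premises take a value in $\{1,\tfrac{1}{2}\}$, some conclusion does). Equivalently, $\Gamma \vdash \Delta$ iff for every valuation $v$: some premise value is $\leq$ some conclusion value, or some premise has value $0$, or some conclusion has value $1$. *)

(* Defs.v *)
(** Truth values 0, 1/2, 1 with order 0 < 1/2 < 1. *)
Inductive tv : Type := tv0 | tvh | tv1.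

Definition rank (x : tv) : nat :=
  match x with tv0 => 0 | tvh => 1 | tv1 => 2 end.

Definition tv_le (x y : tv) : Prop := rank x <= rank y.

Definition tv_leb (x y : tv) : bool := Nat.leb (rank x) (rank y).

Definition godel (x y : tv) : tv := if tv_leb x y then tv1 else y.

Definition fset (Form : Type) := Form -> Prop.
Definition emptyF {Form : Type} : fset Form := fun _ => False.
Definition single {Form : Type} (A : Form) : fset Form := fun C => C = A.
Definition addF {Form : Type} (G : fset Form) (A : Form) : fset Form :=
  fun C => G C \/ C = A.

Definition ss {Form : Type} (Val : (Form -> tv) -> Prop)
  (G D : fset Form) : Prop :=
  forall v, Val v -> (forall g, G g -> v g = tv1) -> exists d, D d /\ v d = tv1.

Definition tt {Form : Type} (Val : (Form -> tv) -> Prop)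
  (G D : fset Form) : Prop :=
  forall v, Val v -> (forall g, G g -> v g <> tv0) -> exists d, D d /\ v d <> tv0.

Definition sstt {Form : Type} (Val : (Form -> tv) -> Prop)
  (G D : fset Form) : Prop := ss Val G D /\ tt Val G D.

(** A semantics over formulae Form is given by its (nonempty) set of
    valuations Val; it is constant expressive if every truth value is
    taken by some formula under every valuation. *)
Definition constant_expressive {Form : Type} (Val : (Form -> tv) -> Prop) : Prop :=
  forall t : tv, exists c : Form, forall v, Val v -> v c = t.

Definition truth_functional {Form : Type} (Val : (Form -> tv) -> Prop)
  (imp : Form -> Form -> Form) (f : tv -> tv -> tv) : Prop :=
  forall v, Val v -> forall A B, v (imp A B) = f (v A) (v B).

Definition deduction_rule {Form : Type} (Val : (Form -> tv) -> Prop)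
  (imp : Form -> Form -> Form) : Prop :=
  forall (G : fset Form) (A B : Form),
    sstt Val G (single (imp A B)) <-> sstt Val (addF G A) (single B).

Definition premise_rule {Form : Type} (Val : (Form -> tv) -> Prop)
  (imp : Form -> Form -> Form) : Prop :=
  forall (G : fset Form) (A B : Form),
    sstt Val (addF G (imp A B)) emptyF <->
    (sstt Val (addF G B) emptyF /\ sstt Val G (single A)).

Definition premise_rule_rl {Form : Type} (Val : (Form -> tv) -> Prop)
  (imp : Form -> Form -> Form) : Prop :=
  forall (G : fset Form) (A B : Form),
    (sstt Val (addF G B) emptyF /\ sstt Val G (single A)) ->
    sstt Val (addF G (imp A B)) emptyF.

(* Main.v *)
Require Import Defs.
From Stdlib Require Import Setoid.

Lemma ex_single {Form : Type} (X : Form) (P : Form -> Prop) :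
  (exists d, single X d /\ P d) <-> P X.
Proof. unfold single; split. intros [d [-> H]]; exact H. intros H; exists X; auto. Qed.

Lemma part1_rl (Form : Type) (Val : (Form -> tv) -> Prop) imp :
  truth_functional Val imp godel -> deduction_rule Val imp.
Proof.
  intros Htf G A B; unfold sstt, ss, tt, addF; split; intros [Hs Ht]; split;
    intros v Hv HG; apply ex_single.
  - destruct (Hs v Hv (fun g Hg => HG g (or_introl Hg))) as [d [Hd E]].
    unfold single in Hd; subst d. rewrite Htf in E by exact Hv.
    pose proof (HG A (or_intror eq_refl)) as HA.
    rewrite HA in E; destruct (v B); unfold godel, tv_leb in *; unfold godel, tv_leb in *; simpl in *; congruence.
  - destruct (Ht v Hv (fun g Hg => HG g (or_introl Hg))) as [d [Hd E]].
    unfold single in Hd; subst d. rewrite Htf in E by exact Hv.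
    pose proof (HG A (or_intror eq_refl)) as HA.
    destruct (v A), (v B); unfold godel, tv_leb in *; simpl in *; congruence.
  - rewrite Htf by exact Hv.
    destruct (v A) eqn:EA.
    + destruct (v B); reflexivity.
    + assert (HB : v B <> tv0).
      { apply (proj1 (ex_single B (fun d => v d <> tv0))).
        apply Ht; auto. intros g [Hg | ->]. rewrite HG; auto; discriminate.
        rewrite EA; discriminate. }
      destruct (v B); unfold godel, tv_leb in *; simpl in *; congruence.
    + assert (HB : v B = tv1).
      { apply (proj1 (ex_single B (fun d => v d = tv1))).
        apply Hs; auto. intros g [Hg | ->]; auto. }
      rewrite HB; reflexivity.
  - rewrite Htf by exact Hv.
    destruct (v A) eqn:EA.
    + destruct (v B); unfold godel, tv_leb in *; simpl in *; discriminate.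
    + assert (HB : v B <> tv0).
      { apply (proj1 (ex_single B (fun d => v d <> tv0))).
        apply Ht; auto. intros g [Hg | ->]; auto. rewrite EA; discriminate. }
      destruct (v B); unfold godel, tv_leb in *; simpl in *; congruence.
    + assert (HB : v B <> tv0).
      { apply (proj1 (ex_single B (fun d => v d <> tv0))).
        apply Ht; auto. intros g [Hg | ->]; auto. rewrite EA; discriminate. }
      destruct (v B); unfold godel, tv_leb in *; simpl in *; congruence.
Qed.

Section Consts.
Context (Form : Type) (Val : (Form -> tv) -> Prop) (c : tv -> Form)
  (Hc : forall t v, Val v -> v (c t) = t) (v0 : Form -> tv) (Hv0 : Val v0)
  (imp : Form -> Form -> Form) (f : tv -> tv -> tv)
  (Htf : truth_functional Val imp f).

Lemma E1 x y : sstt Val emptyF (single (imp (c x) (c y))) <-> f x y = tv1.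
Proof.
  split.
  - intros [Hs _]. destruct (Hs v0 Hv0 (fun g (H : emptyF g) => False_ind _ H)) as [d [Hd E]].
    unfold single in Hd; subst d. rewrite Htf, !Hc in E by exact Hv0. exact E.
  - intros H; split; intros v Hv _; apply ex_single; rewrite Htf, !Hc by exact Hv;
      rewrite H; discriminate || reflexivity.
Qed.

Lemma E2 x y : sstt Val (addF emptyF (c x)) (single (c y)) <->
  ((x = tv1 -> y = tv1) /\ (x <> tv0 -> y <> tv0)).
Proof.
  split.
  - intros [Hs Ht]; split; intros H.
    + destruct (Hs v0 Hv0) as [d [Hd E]].
      * intros g [[] | ->]. rewrite Hc; auto.
      * unfold single in Hd; subst d. rewrite Hc in E; auto.
    + destruct (Ht v0 Hv0) as [d [Hd E]].
      * intros g [[] | ->]. rewrite Hc; auto.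
      * unfold single in Hd; subst d. rewrite Hc in E; auto.
  - intros [H1 H2]; split; intros v Hv HG; apply ex_single; rewrite Hc by exact Hv.
    + apply H1. rewrite <- (Hc x v Hv). apply HG. right; reflexivity.
    + apply H2. rewrite <- (Hc x v Hv). apply HG. right; reflexivity.
Qed.

Lemma E3 x y : sstt Val (single (c tvh)) (single (imp (c x) (c y))) <-> f x y <> tv0.
Proof.
  split.
  - intros [_ Ht]. destruct (Ht v0 Hv0) as [d [Hd E]].
    + intros g Hg; unfold single in Hg; subst g; rewrite Hc; auto; discriminate.
    + unfold single in Hd; subst d. rewrite Htf, !Hc in E by exact Hv0. exact E.
  - intros H; split; intros v Hv HG.
    + exfalso. specialize (HG (c tvh) eq_refl). rewrite Hc in HG; auto; discriminate.
    + apply ex_single; rewrite Htf, !Hc by exact Hv; exact H.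
Qed.

Lemma E4 x y : sstt Val (addF (single (c tvh)) (c x)) (single (c y)) <->
  (x <> tv0 -> y <> tv0).
Proof.
  split.
  - intros [_ Ht] H. destruct (Ht v0 Hv0) as [d [Hd E]].
    + intros g [Hg | ->]. unfold single in Hg; subst g; rewrite Hc; auto; discriminate.
      rewrite Hc; auto.
    + unfold single in Hd; subst d. rewrite Hc in E; auto.
  - intros H; split; intros v Hv HG.
    + exfalso. specialize (HG (c tvh) (or_introl eq_refl)). rewrite Hc in HG; auto; discriminate.
    + apply ex_single; rewrite Hc by exact Hv. apply H. rewrite <- (Hc x v Hv).
      apply HG; right; reflexivity.
Qed.

Lemma part1_lr : deduction_rule Val imp -> forall x y, f x y = godel x y.
Proof.
  intros D x y.
  pose proof (D emptyF (c x) (c y)) as A1.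
  pose proof (D (single (c tvh)) (c x) (c y)) as A2.
  rewrite E1, E2 in A1. rewrite E3, E4 in A2.
  destruct x, y; destruct (f _ _); unfold godel, tv_leb; simpl; try reflexivity;
    exfalso; firstorder congruence.
Qed.

Lemma part2 : ~ premise_rule Val imp.
Proof.
  intros P.
  assert (Hh0 : f tvh tv0 <> tv0).
  { intros E.
    assert (L : sstt Val (addF emptyF (imp (c tvh) (c tv0))) emptyF).
    { split; intros v Hv HG; exfalso.
      + specialize (HG (imp (c tvh) (c tv0)) (or_intror eq_refl)).
        rewrite Htf, !Hc, E in HG by exact Hv; discriminate.
      + specialize (HG (imp (c tvh) (c tv0)) (or_intror eq_refl)).
        rewrite Htf, !Hc, E in HG by exact Hv; auto. }
    destruct (proj1 (P emptyF (c tvh) (c tv0)) L) as [_ [Hs _]].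
    destruct (Hs v0 Hv0 (fun g (H : emptyF g) => False_ind _ H)) as [d [Hd E']].
    unfold single in Hd; subst d. rewrite Hc in E' by exact Hv0; discriminate. }
  destruct (proj2 (P (single (c tvh)) (c tvh) (c tv0))) as [_ Ht].
  - split.
    + split; intros v Hv HG; exfalso.
      * specialize (HG (c tv0) (or_intror eq_refl)); rewrite Hc in HG; auto; discriminate.
      * specialize (HG (c tv0) (or_intror eq_refl)); rewrite Hc in HG; auto.
    + split; intros v Hv HG.
      * exfalso. specialize (HG (c tvh) eq_refl). rewrite Hc in HG; auto; discriminate.
      * apply ex_single; rewrite Hc by exact Hv; discriminate.
  - destruct (Ht v0 Hv0) as [d [[] _]].
    intros g [Hg | ->].
    + unfold single in Hg; subst g; rewrite Hc; auto; discriminate.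
    + rewrite Htf, !Hc by exact Hv0; exact Hh0.
Qed.

End Consts.

Lemma part3 (Form : Type) (Val : (Form -> tv) -> Prop) imp :
  truth_functional Val imp godel -> premise_rule_rl Val imp.
Proof.
  intros Htf G A B [[_ H1] [_ H2]].
  assert (K : forall v, Val v -> (forall g, G g -> v g <> tv0) ->
                godel (v A) (v B) <> tv0 -> False).
  { intros v Hv HG Hgd.
    assert (HB : v B = tv0).
    { destruct (v B) eqn:EB; auto; exfalso;
      (destruct (H1 v Hv) as [d [[] _]];
       intros g [Hg | ->]; [auto | rewrite EB; discriminate]). }
    destruct (H2 v Hv HG) as [d [Hd E]]. unfold single in Hd; subst d.
    rewrite HB in Hgd. destruct (v A); unfold godel, tv_leb in *; simpl in *; congruence. }
  split; intros v Hv HG; exfalso.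
  - apply (K v Hv).
    + intros g Hg; rewrite (HG g (or_introl Hg)); discriminate.
    + rewrite <- Htf by exact Hv. rewrite (HG _ (or_intror eq_refl)); discriminate.
  - apply (K v Hv).
    + intros g Hg; exact (HG g (or_introl Hg)).
    + rewrite <- Htf by exact Hv. exact (HG _ (or_intror eq_refl)).
Qed.

Theorem theorem4p2 (Form : Type) (Val : (Form -> tv) -> Prop)
  (Hne : exists v, Val v)
  (Hce : constant_expressive Val) :
  (forall (imp : Form -> Form -> Form) (f : tv -> tv -> tv),
      truth_functional Val imp f ->
      (deduction_rule Val imp <-> (forall x y, f x y = godel x y))) /\
  (forall (imp : Form -> Form -> Form) (f : tv -> tv -> tv),
      truth_functional Val imp f -> ~ premise_rule Val imp) /\
  (forall (imp : Form -> Form -> Form),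
      truth_functional Val imp godel -> premise_rule_rl Val imp).
Proof.
  destruct Hne as [v0 Hv0].
  destruct (Hce tv0) as [a0 Ha0], (Hce tvh) as [ah Hah], (Hce tv1) as [a1 Ha1].
  set (c := fun t => match t with tv0 => a0 | tvh => ah | tv1 => a1 end).
  assert (Hc : forall t v, Val v -> v (c t) = t) by (intros [] v Hv; simpl; auto).
  split; [|split].
  - intros imp f Htf; split.
    + exact (part1_lr Form Val c Hc v0 Hv0 imp f Htf).
    + intros Hf. apply part1_rl.
      intros v Hv A B. rewrite Htf by exact Hv. apply Hf.
  - intros imp f Htf. exact (part2 Form Val c Hc v0 Hv0 imp f Htf).
  - exact (part3 Form Val).
Qed.
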